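(* Consider an instance with $n$ agents, $m$ indivisible items and binary additive valuations (notation as in the context). For any two stable allocations $\chi,\chi'$ with profiles $(h_1,\dots,h_n)$ and $(h'_1,\dots,h'_n)$, we have $|h_i-h'_i|\le 1$ for every agent $i\in[n]$; i.e. the Chebyshev distance between $\mathbf{p}(\chi)$ and $\mathbf{p}(\chi')$ is at most $1$.
   Context: Agents $[n]$, items $[m]$. Each agent $i$ has a set $L_i\subseteq[m]$ of liked items and valuation $v_i(S)=|S\cap L_i|$. An allocation $\chi=(\chi_1,\dots,\chi_n)$ is a tuple of pairwise disjoint subsets of $[m]$; it is clean if $\chi_i\subseteq L_i$ for all $i$, and max-USW if it maximizes $\sum_i v_i(\chi_i)$. Throughout, ''allocation'' means a clean max-USW allocation. Profile: $\mathbf{p}(\chi)=(h_1,\dots,h_n)$, $h_i=|\chi_i|$. Given $\chi$, form a directed graph on $[n]$ with an arc $(i,i')$, $i\ne i'$, whenever some $o\in\chi_i$ has $o\in L_{i'}$; $\chi$ admits a transfer $u\to v$ if there is a simple directed path from $u$ to $v$ with at least one arc. A transfer $u\to v$ is narrowing if $h_u\ge h_v+2$; $\chi$ is stable if it admits no narrowing transfer. *)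

(* Defs.v *)
From mathcomp Require Import all_boot.
Set Implicit Arguments. Unset Strict Implicit. Unset Printing Implicit Defensive.

(* Agents are 'I_n, items are 'I_m.  L i = set of items liked by agent i.
   An allocation is a family chi : {ffun 'I_n -> {set 'I_m}}. *)

Definition val (n m : nat) (L : 'I_n -> {set 'I_m}) (i : 'I_n) (S : {set 'I_m}) : nat :=
  #|S :&: L i|.

Definition is_alloc (n m : nat) (chi : {ffun 'I_n -> {set 'I_m}}) : Prop :=
  forall i j : 'I_n, i != j -> [disjoint chi i & chi j].

Definition clean (n m : nat) (L : 'I_n -> {set 'I_m}) (chi : {ffun 'I_n -> {set 'I_m}}) : Prop :=
  forall i, chi i \subset L i.

Definition usw (n m : nat) (L : 'I_n -> {set 'I_m}) (chi : {ffun 'I_n -> {set 'I_m}}) : nat :=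
  \sum_(i < n) val L i (chi i).

Definition max_usw (n m : nat) (L : 'I_n -> {set 'I_m}) (chi : {ffun 'I_n -> {set 'I_m}}) : Prop :=
  is_alloc chi /\ forall chi', is_alloc chi' -> usw L chi' <= usw L chi.

(* "allocation" in the paper = clean max-USW allocation *)
Definition clean_max_usw (n m : nat) (L : 'I_n -> {set 'I_m}) (chi : {ffun 'I_n -> {set 'I_m}}) : Prop :=
  clean L chi /\ max_usw L chi.

Definition prof (n m : nat) (chi : {ffun 'I_n -> {set 'I_m}}) (i : 'I_n) : nat := #|chi i|.

Definition arc (n m : nat) (L : 'I_n -> {set 'I_m}) (chi : {ffun 'I_n -> {set 'I_m}}) : rel 'I_n :=
  fun i i' => (i != i') && [exists o, (o \in chi i) && (o \in L i')].

Definition admits_transfer (n m : nat) (L : 'I_n -> {set 'I_m}) (chi : {ffun 'I_n -> {set 'I_m}})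
  (u v : 'I_n) : Prop :=
  exists p : seq 'I_n, [/\ p != [::], path (arc L chi) u p, last u p = v & uniq (u :: p)].

Definition narrowing (n m : nat) (L : 'I_n -> {set 'I_m}) (chi : {ffun 'I_n -> {set 'I_m}})
  (u v : 'I_n) : Prop :=
  admits_transfer L chi u v /\ prof chi v + 2 <= prof chi u.

Definition stable (n m : nat) (L : 'I_n -> {set 'I_m}) (chi : {ffun 'I_n -> {set 'I_m}}) : Prop :=
  clean_max_usw L chi /\ forall u v, ~ narrowing L chi u v.

(* Main.v *)
Require Import Defs.
From mathcomp Require Import all_boot.
From mathcomp Require Import zify.

Lemma disjointP (T : finType) (A B : {set T}) :
  reflect (forall x, x \in A -> x \in B -> False) [disjoint A & B].
Proof.
rewrite disjoints_subset; apply: (iffP subsetP) => h x xa.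
  by move=> xb; have := h x xa; rewrite inE xb.
by rewrite inE; apply/negP => xb; apply: h xa xb.
Qed.

Lemma free_alloc (n m : nat) (L : 'I_n -> {set 'I_m})
  (chi chi' : {ffun 'I_n -> {set 'I_m}}) a o :
  clean L chi -> clean_max_usw L chi' -> o \in chi a -> exists b, o \in chi' b.
Proof.
move=> cl [cl' [al' mx']] oa.
case: (boolP [exists b, o \in chi' b]) => [/existsP//|/existsP nb].
have nb' : forall b, o \notin chi' b by move=> b; apply/negP => h; apply: nb; exists b.
pose chi2 := [ffun k => if k == a then o |: chi' a else chi' k].
have al2 : is_alloc chi2.
  rewrite /is_alloc => k l kl; rewrite !ffunE.
  case: (eqVneq k a) => [ka|ka]; case: (eqVneq l a) => [la|la].
  - by move: kl; rewrite ka la eqxx.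
  - apply/disjointP => x; rewrite in_setU1 => /orP [/eqP ->|xa]; first by rewrite (negbTE (nb' l)).
    have al2 : a != l by rewrite eq_sym.
    by move/disjointP: (al' a l al2) => /(_ x xa).
  - apply/disjointP => x xk; rewrite in_setU1 => /orP [/eqP xo|xa].
      by move: xk; rewrite xo (negbTE (nb' k)).
    by move/disjointP: (al' k a ka) => /(_ x xk).
  - exact: al'.
have := mx' _ al2.
rewrite /usw (bigD1 a) //= [X in _ <= X](bigD1 a) //= ffunE eqxx.
have -> : \sum_(i < n | i != a) Defs.val L i (chi2 i) = \sum_(i < n | i != a) Defs.val L i (chi' i).
  by apply: eq_bigr => k ka; rewrite ffunE (negbTE ka).
rewrite /Defs.val setIUl.
have -> : [set o] :&: L a = [set o].
  by apply/setIidPl; rewrite sub1set; apply: (subsetP (cl a)).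
rewrite cardsU1 inE (negbTE (nb' a)) /=. by rewrite -addnA add1n ltnn.
Qed.

Lemma key (n m : nat) (L : 'I_n -> {set 'I_m})
  (chi chi' : {ffun 'I_n -> {set 'I_m}}) :
  stable L chi -> stable L chi' ->
  forall i : 'I_n, prof chi i <= prof chi' i + 1.
Proof.
move=> [[cl [al mx]] ns] [[cl' [al' mx']] ns'] i.
rewrite leqNgt; apply/negP => Hi.
pose e : rel 'I_n := fun a b => (a != b) && [exists o, (o \in chi a) && (o \in chi' b)].
pose R := [set j | connect e i j].
have iR : i \in R by rewrite inE connect0.
have cov : forall a o, a \in R -> o \in chi a -> exists2 b, b \in R & o \in chi' b.
  move=> a o aR oa.
  have [b ob] := @free_alloc n m L chi chi' a o cl (conj cl' (conj al' mx')) oa.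
  exists b => //.
  case: (eqVneq a b) => [<-//|ab].
  move: aR; rewrite !inE => aR; apply: connect_trans aR (connect1 _).
  by rewrite /e ab /=; apply/existsP; exists o; rewrite oa ob.
have sumle : \sum_(a in R) #|chi a| <= \sum_(a in R) #|chi' a|.
  have E : forall (c : {ffun 'I_n -> {set 'I_m}}),
      \sum_(a in R) #|c a| = \sum_o \sum_(a in R) (o \in c a : nat).
    move=> c; rewrite exchange_big /=; apply: eq_bigr => a _.
    by rewrite -sum1_card big_mkcond /=.
  rewrite !E; apply: leq_sum => o _.
  case: (boolP [exists a in R, o \in chi a]) => [/existsP [a /andP [aR oa]]|no].
  - have [b bR ob] := cov a o aR oa.
    rewrite (bigD1 a) //= oa big1 /=; last first.
      move=> k /andP [kR ka]; case: (boolP (o \in chi k)) => // ok.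
      by have := al k a ka; rewrite disjoint_sym => /disjointP /(_ o oa ok).
    by rewrite (bigD1 b) //= ob.
  - rewrite big1 // => k kR; case: (boolP (o \in chi k)) => // ok.
    by case/negP: no; apply/existsP; exists k; rewrite kR ok.
have [j jR jlt] : exists2 j, j \in R & prof chi j < prof chi' j.
  case: (boolP [exists j in R, prof chi j < prof chi' j]) => [/existsP [j /andP [? ?]]|no].
    by exists j.
  exfalso; move: sumle.
  rewrite (bigD1 i) //= [X in _ <= X](bigD1 i) //=.
  have : \sum_(a in R | a != i) #|chi' a| <= \sum_(a in R | a != i) #|chi a|.
    apply: leq_sum => a /andP [aR _]; rewrite leqNgt; apply/negP => h.
    by case/negP: no; apply/existsP; exists a; rewrite aR.
  rewrite /prof in Hi. move=> h1 h2; have := leq_trans h2 (leq_add (leqnn _) h1); rewrite leq_add2r => h3; move: (leq_ltn_trans h3 (leq_ltn_trans (leq_addr 1 _) Hi)); by rewrite ltnn.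
have ji : j != i by apply/eqP => ji; move: jlt Hi; rewrite ji; lia.
move: jR; rewrite inE => /connectP [p0 pth0 lst0].
have [p [pth up lp]] : exists p, [/\ path e i p, uniq (i :: p) & last i p = j].
  by rewrite lst0; case: (shortenP pth0) => p pth up _; exists p.
have pn : p != [::] by case: p pth up lp => //= _ _ ij; move: ji; rewrite ij eqxx.
have t1 : admits_transfer L chi i j.
  exists p; split => //.
  apply: sub_path pth => a b /andP [ab /existsP [o /andP [oa ob]]].
  rewrite /Defs.arc /= ab /=; apply/existsP; exists o; rewrite oa /=.
  exact: (subsetP (cl' b)).
have t2 : admits_transfer L chi' j i.
  exists (rev (belast i p)); split.
  - by rewrite -size_eq0 size_rev size_belast size_eq0.
  - rewrite -lp rev_path; apply: sub_path pth => a b /andP [ab /existsP [o /andP [oa ob]]].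
    rewrite /Defs.arc /= eq_sym ab /=; apply/existsP; exists o; rewrite ob /=.
    exact: (subsetP (cl a)).
  - by case: p pn {pth up lp} => //= y s _; rewrite rev_cons last_rcons.
  - have h : j :: rev (belast i p) = rev (i :: p) by rewrite [in RHS]lastI rev_rcons lp.
    by rewrite h rev_uniq.
have n1 := ns i j. have n2 := ns' j i.
rewrite /narrowing in n1 n2.
have c1 : prof chi i < prof chi j + 2 by rewrite ltnNge; apply/negP => h; apply: n1.
have c2 : prof chi' j < prof chi' i + 2 by rewrite ltnNge; apply/negP => h; apply: n2.
lia.
Qed.

Theorem theorem2 (n m : nat) (L : 'I_n -> {set 'I_m})
  (chi chi' : {ffun 'I_n -> {set 'I_m}}) :
  stable L chi -> stable L chi' ->
  forall i : 'I_n, prof chi i <= prof chi' i + 1 /\ prof chi' i <= prof chi i + 1.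
Proof.
move=> s s' i; split; [exact: key s s' i | exact: key s' s i].
Qed.
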